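(* Let $t$ be the Thue-Morse word and $PPL_t$ its prefix palindromic length function. Then for all integers $n\geq 0$: \begin{align*} PPL_t(4n)&=PPL_t(n),\\ PPL_t(4n+1)&=PPL_t(n)+1,\\ PPL_t(4n+2)&=\min(PPL_t(n),PPL_t(n+1))+2,\\ PPL_t(4n+3)&=PPL_t(n+1)+1. \end{align*}
   Context: A palindrome is a finite word $p=p[1]\cdots p[n]$ with $p[i]=p[n-i+1]$ for all $i$. The palindromic length of a finite word $s$ is the minimal number $k$ such that $s$ is a concatenation of $k$ nonempty palindromes (the empty word has palindromic length $0$). For an infinite word $u=u[1]u[2]\cdots$, $PPL_u(n)$ denotes the palindromic length of its prefix $u[1]\cdots u[n]$ of length $n$, with $PPL_u(0)=0$. The Thue-Morse word $t=abbabaabbaababba\cdots$ is the fixed point starting with $a$ of the morphism $\tau: a\mapsto abba,\ b\mapsto baab$. *)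

(* Defs.v *)
From mathcomp Require Import all_boot.
Set Implicit Arguments. Unset Strict Implicit. Unset Printing Implicit Defensive.

(* Letters: a = false, b = true. *)
Definition palindrome (s : seq bool) : bool := rev s == s.

Fixpoint pal_split (k : nat) (s : seq bool) : bool :=
  match k with
  | 0 => s == [::]
  | k'.+1 => has (fun i => palindrome (take i.+1 s) && pal_split k' (drop i.+1 s))
                 (iota 0 (size s))
  end.

Lemma pal_split_exists (s : seq bool) : exists k, pal_split k s.
Proof.
exists (size s); elim: s => [|x s IH] //.
rewrite [size _]/=.
change (has (fun i => palindrome (take i.+1 (x :: s)) && pal_split (size s) (drop i.+1 (x :: s)))
          (iota 0 (size s).+1)).
apply/hasP; exists 0; first by rewrite mem_iota.
by rewrite /= drop0 take0 IH andbT /palindrome.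
Qed.

Definition pal_length (s : seq bool) : nat := ex_minn (pal_split_exists s).

Definition tau (s : seq bool) : seq bool :=
  flatten [seq [:: x; ~~ x; ~~ x; x] | x <- s].

(* tau^k(a); it has length 4^k and is a prefix of the fixed point *)
Definition tau_iter (k : nat) : seq bool := iter k tau [:: false].

(* the Thue-Morse word t, 0-indexed: t i = letter t[i+1] *)
Definition thue_morse (i : nat) : bool := nth false (tau_iter i) i.

Definition prefix_tm (n : nat) : seq bool := mkseq thue_morse n.

Definition PPL_t (n : nat) : nat := pal_length (prefix_tm n).

(* Main.v *)
Require Import Defs.
From mathcomp Require Import all_boot zify.

Notation T := thue_morse.
Definition blk (x : bool) r := nth false [:: x; ~~ x; ~~ x; x] r.

Lemma tau_cons x s : tau (x :: s) = [:: x; ~~ x; ~~ x; x] ++ tau s.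
Proof. by []. Qed.

Lemma tau_cat s u : tau (s ++ u) = tau s ++ tau u.
Proof. by rewrite /tau map_cat flatten_cat. Qed.

Lemma size_tau s : size (tau s) = 4 * size s.
Proof. elim: s => [|x s IH] //; rewrite tau_cons size_cat IH /=; lia. Qed.

Lemma size_tau_iter k : size (tau_iter k) = 4 ^ k.
Proof.
elim: k => [|k IH] //. change (size (tau (tau_iter k)) = 4 ^ k.+1). by rewrite size_tau IH expnS.
Qed.

Lemma tau_iter_prefix k : exists u, tau_iter k.+1 = tau_iter k ++ u.
Proof.
elim: k => [|k [u IH]].
  by exists [:: true; true; false].
exists (tau u). change (tau (tau_iter k.+1) = tau (tau_iter k) ++ tau u).
by rewrite IH tau_cat.
Qed.

Lemma nth_tau_iter_d k d i : i < 4 ^ k ->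
  nth false (tau_iter (k + d)) i = nth false (tau_iter k) i.
Proof.
move=> Hi; elim: d => [|d IH]; first by rewrite addn0.
rewrite addnS; have [u ->] := tau_iter_prefix (k + d).
rewrite nth_cat size_tau_iter.
have -> : i < 4 ^ (k + d) by apply: (leq_trans Hi); rewrite leq_pexp2l // leq_addr.
done.
Qed.

Lemma T_nth k i : i < 4 ^ k -> T i = nth false (tau_iter k) i.
Proof.
move=> Hi; rewrite /thue_morse.
have Hii : i < 4 ^ i by apply: ltn_expl.
rewrite -(nth_tau_iter_d _ (maxn i k - i) _ Hii) -(nth_tau_iter_d _ (maxn i k - k) _ Hi).
by rewrite !subnKC // ?leq_maxl ?leq_maxr.
Qed.

Lemma nth_tau s j r : j < size s -> r < 4 ->
  nth false (tau s) (4 * j + r) = blk (nth false s j) r.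
Proof.
elim: s j => [|x s IH] [|j] // Hj Hr.
  by rewrite tau_cons nth_cat /= Hr.
rewrite tau_cons nth_cat /= (_ : 4 * j.+1 + r < 4 = false); last by lia.
rewrite (_ : 4 * j.+1 + r - 4 = 4 * j + r); last by lia.
by apply: IH.
Qed.

Lemma T4 j r : r < 4 -> T (4 * j + r) = blk (T j) r.
Proof.
move=> Hr.
have Hj : j < 4 ^ j by apply: ltn_expl.
rewrite (T_nth j.+1); last by rewrite expnS; lia.
change (nth false (tau (tau_iter j)) (4 * j + r) = blk (T j) r).
rewrite nth_tau ?size_tau_iter //.
Qed.

Lemma T0 j : T (4 * j) = T j.
Proof. by rewrite -[4 * j]addn0 T4. Qed.
Lemma T1 j : T (4 * j + 1) = ~~ T j.
Proof. by rewrite T4. Qed.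
Lemma T2 j : T (4 * j + 2) = ~~ T j.
Proof. by rewrite T4. Qed.
Lemma T3 j : T (4 * j + 3) = T j.
Proof. by rewrite T4. Qed.

Lemma Tdbl j : T (2 * j) = T j /\ T (2 * j + 1) = ~~ T j.
Proof.
elim/ltn_ind: j => j IH.
have [u [Ej|Ej]] : exists u, j = 2*u \/ j = 2*u+1 by exists (j %/ 2); lia.
all: subst j.
- rewrite (_ : 2 * (2 * u) + 1 = 4 * u + 1); last by lia.
  rewrite (_ : 2 * (2 * u) = 4 * u); last by lia.
  rewrite T0 T1.
  case: (posnP u) => [->|Hu]; first by rewrite muln0; split.
  have [E0 _] := IH u (ltac:(lia)).
  by rewrite E0; split.
- rewrite (_ : 2 * (2 * u + 1) + 1 = 4 * u + 3); last by lia.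
  rewrite (_ : 2 * (2 * u + 1) = 4 * u + 2); last by lia.
  rewrite T2 T3.
  have [E0 E1] := IH u (ltac:(lia)).
  by rewrite E1 negbK; split.
Qed.

Lemma Te j : T (2 * j) = T j. Proof. by case: (Tdbl j). Qed.
Lemma To j : T (2 * j + 1) = ~~ T j. Proof. by case: (Tdbl j). Qed.

Lemma no3 j : ~ (T j = T j.+1 /\ T j.+1 = T j.+2).
Proof.
have [u [->|->]] : exists u, j = 2*u \/ j = 2*u+1 by exists (j %/ 2); lia.
- rewrite (_ : (2*u).+1 = 2*u+1); last by lia.
  move=> [H _]; move: H; rewrite To Te; by case: (T u).
- rewrite (_ : (2*u+1).+2 = 2*(u+1)+1); last by lia.
  rewrite (_ : (2*u+1).+1 = 2*(u+1)); last by lia.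
  move=> [_ H]; move: H; rewrite To Te; by case: (T (u+1)).
Qed.

Definition pal (a b : nat) : Prop := forall i, a <= i < b -> T i = T (a + b - 1 - i).

Lemma palAt a b i j : pal a b -> a <= i < b -> j = a + b - 1 - i -> T i = T j.
Proof. by move=> H Hi ->; apply: H. Qed.

Lemma pal_sub a b a' b' : pal a b -> a <= a' -> a' + b' = a + b -> pal a' b'.
Proof.
move=> H H1 H2 i Hi; rewrite (_ : a' + b' - 1 - i = a + b - 1 - i); last by lia.
apply: H; lia.
Qed.

Lemma pal_tau k n : pal (4 * k) (4 * n) -> pal k n.
Proof.
move=> H i Hi.
have := palAt _ _ (4 * i) (4 * (k + n - 1 - i) + 3) H ltac:(lia) ltac:(lia).
by rewrite T0 T3.
Qed.

Lemma tau_pal k n : pal k n -> pal (4 * k) (4 * n).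
Proof.
move=> H i Hi.
have [j [r [Ei Hr]]] : exists j r, i = 4 * j + r /\ r < 4 by exists (i %/ 4), (i %% 4); split; [rewrite {1}(divn_eq i 4); lia | by rewrite ltn_pmod].
subst i.
rewrite (_ : 4 * k + 4 * n - 1 - (4 * j + r) = 4 * (k + n - 1 - j) + (3 - r)); last by lia.
rewrite !T4; try lia.
rewrite -(H j); last by lia.
by clear Hi; case: r Hr => [|[|[|[|]]]].
Qed.

Lemma pal_ext k n : 0 < k -> k <= n + 1 -> pal k n -> T (k - 1) = T n -> pal (k - 1) (n + 1).
Proof.
move=> Hk Hkn H E i Hi.
case: (ltngtP i (k-1)) => [?|?|->]; first by lia.
- case: (ltngtP i n) => [?|?|->]; last by transitivity (T (k-1)); [by rewrite E | congr T; lia].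
  + rewrite (_ : k - 1 + (n + 1) - 1 - i = k + n - 1 - i); last by lia.
    apply: H; lia.
  + lia.
- by rewrite E; congr T; lia.
Qed.

Lemma Te' j x : x = 2 * j -> T x = T j. Proof. by move=> ->; apply: Te. Qed.
Lemma To' j x : x = 2 * j + 1 -> T x = ~~ T j. Proof. by move=> ->; apply: To. Qed.

Lemma no5 j : ~ pal j (j + 5).
Proof.
move=> H.
have E0 := palAt _ _ (j) (j + 4) H ltac:(lia) ltac:(lia).
have E1 := palAt _ _ (j + 1) (j + 3) H ltac:(lia) ltac:(lia).
have [u [Ej|Ej]] : exists u, j = 2*u \/ j = 2*u+1 by exists (j %/ 2); lia.
- apply: (no3 u).
  rewrite (Te' u j) in E0; last by lia.
  rewrite (Te' (u.+2) (j+4)) in E0; last by lia.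
  rewrite (To' u (j+1)) in E1; last by lia.
  rewrite (To' (u.+1) (j+3)) in E1; last by lia.
  move: E0 E1; case: (T u); case: (T u.+1); case: (T u.+2) => //.
- apply: (no3 u).
  rewrite (To' u j) in E0; last by lia.
  rewrite (To' (u.+2) (j+4)) in E0; last by lia.
  rewrite (Te' u.+1 (j+1)) in E1; last by lia.
  rewrite (Te' (u.+2) (j+3)) in E1; last by lia.
  move: E0 E1; case: (T u); case: (T u.+1); case: (T u.+2) => //.
Qed.

Lemma center a b : a < b -> ~~ odd (b - a) -> pal a b -> exists u, a + b = 4 * u.
Proof.
move=> Hab Hev H.
have H2 : (b - a) %% 2 = 0 by rewrite modn2; move: Hev; case: odd.
have [c Hc] : exists c, a + b = 2 * c by exists ((a + b) %/ 2); lia.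
have E := palAt _ _ (c - 1) (c) H ltac:(lia) ltac:(lia).
have [u [Eu|Eu]] : exists u, c = 2*u \/ c = 2*u+1 by exists (c %/ 2); lia.
- exists u; lia.
- move: E; rewrite Eu (_ : 2 * u + 1 - 1 = 2 * u); last by lia.
  by rewrite To Te; case: (T u).
Qed.

Lemma dropl_cat' (n : nat) (u v : seq bool) : n <= size u -> drop n (u ++ v) = drop n u ++ v.
Proof.
move=> H; rewrite drop_cat; case: ltngtP H => //.
move=> E _; by rewrite E subnn drop0 drop_size.
Qed.

Lemma pal_split_cat k l u v : pal_split k u -> pal_split l v -> pal_split (k + l) (u ++ v).
Proof.
elim: k u => [|k IH] u /=; first by move/eqP ->.
move=> /hasP [i]; rewrite mem_iota => /andP[_ Hi] /andP[Hp Hs] Hv.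
apply/hasP; exists i; first by rewrite mem_iota size_cat; lia.
rewrite takel_cat ?Hp //=.
rewrite dropl_cat' //.
by apply: IH.
Qed.

Lemma pal_split1 v : palindrome v -> v != [::] -> pal_split 1 v.
Proof.
move=> Hp Hn /=; apply/hasP; exists (size v).-1.
  rewrite mem_iota; case: v Hn {Hp} => //= x s _; lia.
have -> : (size v).-1.+1 = size v by case: v Hn {Hp}.
by rewrite take_size drop_size Hp.
Qed.

Lemma pal_split_last k s : pal_split k.+1 s ->
  exists u v, [/\ s = u ++ v, palindrome v, v != [::] & pal_split k u].
Proof.
elim: k s => [|k IH] s /= /hasP [i]; rewrite mem_iota => /andP[_ Hi] /andP[Hp Hs].
- exists [::], s; split => //.
  + move: Hs => /eqP Hd. by rewrite -(cat_take_drop i.+1 s) Hd cats0.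
  + by case: s Hi {Hp Hs}.
- have [u [v [E Hv Hn Hu]]] := IH _ Hs.
  exists (take i.+1 s ++ u), v; split => //.
  + by rewrite -catA -E cat_take_drop.
  + apply: (@pal_split_cat 1 k _ _ _ Hu); apply: pal_split1 => //.
    rewrite -size_eq0 size_take; case: ifP => _ //; move: Hi; rewrite add0n; by case: (size s).
Qed.

Lemma pl_spec s : pal_split (pal_length s) s.
Proof. by rewrite /pal_length; case: ex_minnP. Qed.

Lemma pl_min s k : pal_split k s -> pal_length s <= k.
Proof. rewrite /pal_length; case: ex_minnP => m _ H; apply: H. Qed.

Lemma pl_app u v : palindrome v -> pal_length (u ++ v) <= (pal_length u).+1.
Proof.
move=> Hp; case: (v =P [::]) => [->|/eqP Hn]; first by rewrite cats0.
apply: pl_min; rewrite -addn1; apply: pal_split_cat; first exact: pl_spec.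
exact: pal_split1.
Qed.

Lemma pl_last s : s != [::] -> exists u v,
  [/\ s = u ++ v, palindrome v, v != [::] & pal_length s = (pal_length u).+1].
Proof.
move=> Hn; have := pl_spec s.
case E: (pal_length s) => [|m].
  by move=> /= /eqP Hs; rewrite Hs in Hn.
move=> /pal_split_last [u [v [Es Hv Hvn Hu]]].
exists u, v; split => //.
apply/eqP; rewrite eqn_leq; apply/andP; split; last by rewrite ltnS; apply: pl_min.
by rewrite -E Es pl_app.
Qed.

Notation f := PPL_t.

Lemma palP (s : seq bool) : reflect (forall i, i < size s -> nth false s i = nth false s (size s - i.+1)) (palindrome s).
Proof.
apply: (iffP eqP) => [H i Hi | H].
  by rewrite -{1}H nth_rev.
apply: (@eq_from_nth _ false); first by rewrite size_rev.
move=> i; rewrite size_rev => Hi; rewrite nth_rev // H; last by lia.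
congr nth; lia.
Qed.

Lemma size_dp a b : size (drop a (prefix_tm b)) = b - a.
Proof. by rewrite size_drop size_mkseq. Qed.

Lemma nthd a b i : i < b - a -> nth false (drop a (prefix_tm b)) i = T (a + i).
Proof. move=> Hi; rewrite nth_drop nth_mkseq //; lia. Qed.

Lemma pal_drop a b : a <= b -> palindrome (drop a (prefix_tm b)) <-> pal a b.
Proof.
move=> Hab; split.
- move/palP; rewrite size_dp => H j Hj.
  have := H (j - a) ltac:(lia).
  rewrite !nthd; try lia.
  rewrite (_ : a + (j - a) = j); last by lia.
  by rewrite (_ : a + (b - a - (j - a).+1) = a + b - 1 - j); last by lia.
- move=> H; apply/palP; rewrite size_dp => i Hi.
  rewrite !nthd; try lia.
  rewrite (H (a + i)); last by lia.
  congr T; lia.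
Qed.

Lemma take_pre a b : a <= b -> take a (prefix_tm b) = prefix_tm a.
Proof.
move=> H; rewrite /prefix_tm /mkseq -map_take take_iota.
by rewrite (_ : minn a b = a) //; lia.
Qed.

Lemma D1 a b : a <= b -> pal a b -> f b <= (f a).+1.
Proof.
move=> Hab Hp; rewrite /PPL_t -(cat_take_drop a (prefix_tm b)) take_pre //.
apply: pl_app; exact/pal_drop.
Qed.

Lemma D2 b : 0 < b -> exists a, [/\ a < b, pal a b & f b = (f a).+1].
Proof.
move=> Hb.
have Hn : prefix_tm b != [::] by rewrite -size_eq0 size_mkseq; lia.
have [u [v [E Hv Hvn Hl]]] := pl_last _ Hn.
have Hs : size u + size v = b by rewrite -size_cat -E size_mkseq.
have Hv0 : 0 < size v by rewrite lt0n size_eq0.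
exists (size u); split; first by lia.
- apply/pal_drop; first by lia.
  by rewrite E drop_size_cat.
- rewrite /PPL_t Hl; congr S; congr pal_length.
  rewrite -(take_pre (size u) b); last by lia.
  by rewrite E take_size_cat.
Qed.

Lemma f0 : f 0 = 0.
Proof. by apply/eqP; rewrite -leqn0; apply: pl_min. Qed.

Lemma Lip b : f b.+1 <= (f b).+1.
Proof. apply: D1 => // i Hi; congr T; lia. Qed.

Lemma Lip' x y : y = x + 1 -> f y <= f x + 1.
Proof. move=> ->; rewrite !addn1; exact: Lip. Qed.

Lemma D1' a b : a <= b -> pal a b -> f b <= f a + 1.
Proof. rewrite addn1; exact: D1. Qed.

Lemma U0 n : f (4 * n) <= f n.
Proof.
elim/ltn_ind: n => n IH.
case: (posnP n) => [->|Hn]; first by rewrite muln0.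
have [a [Ha Hp E]] := D2 n Hn.
have := D1' (4 * a) (4 * n) ltac:(lia) (tau_pal _ _ Hp).
have := IH a Ha.
lia.
Qed.

Lemma U2 n n1 : n1 = n + 1 -> f (4 * n + 2) <= f n1 + 2.
Proof.
move=> En1.
have [a [Ha Hp E]] := D2 n1 ltac:(lia).
have Hp' : pal (4 * a + 2) (4 * n + 2).
  apply: (pal_sub _ _ _ _ (tau_pal _ _ Hp)); lia.
have := D1' (4 * a + 2) (4 * n + 2) ltac:(lia) Hp'.
have := Lip' (4 * a + 1) (4 * a + 2) ltac:(lia).
have := Lip' (4 * a) (4 * a + 1) ltac:(lia).
have := U0 a.
lia.
Qed.

Lemma U3 n n1 : n1 = n + 1 -> f (4 * n + 3) <= f n1 + 1.
Proof.
move=> En1.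
have [a [Ha Hp E]] := D2 n1 ltac:(lia).
have Hp' : pal (4 * a + 1) (4 * n + 3).
  apply: (pal_sub _ _ _ _ (tau_pal _ _ Hp)); lia.
have := D1' (4 * a + 1) (4 * n + 3) ltac:(lia) Hp'.
have := Lip' (4 * a) (4 * a + 1) ltac:(lia).
have := U0 a.
lia.
Qed.

Lemma classify i m : i < m -> pal i m -> [\/ m = i + 1, m = i + 3 | exists u, i + m = 4 * u].
Proof.
move=> Him Hp.
case Ho: (odd (m - i)); last first.
  by apply: Or33; apply: center => //; rewrite Ho.
have H2 : (m - i) %% 2 = 1 by rewrite modn2 Ho.
have [d Ed] : exists d, m = i + 2 * d + 1 by exists ((m - i) %/ 2); lia.
case: d Ed => [|[|d]] Ed; first by apply: Or31; lia.
  by apply: Or32; lia.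
exfalso; apply: (no5 (i + d)).
apply: (pal_sub _ _ _ _ Hp); lia.
Qed.

Definition Q m := forall n n1, n1 = n + 1 ->
  [/\ m = 4 * n -> f m = f n,
      m = 4 * n + 1 -> f m = f n + 1,
      m = 4 * n + 2 -> f m = minn (f n) (f n1) + 2
    & m = 4 * n + 3 -> f m = f n1 + 1].

Lemma ext_letter i m k n : pal i m -> i <= 4 * k - 1 < m -> 4 * n = i + m - 1 - (4 * k - 1) -> 0 < k ->
  T (k - 1) = T n.
Proof.
move=> Hp H1 H2 Hk.
have := palAt _ _ _ _ Hp H1 H2.
rewrite (_ : 4 * k - 1 = 4 * (k - 1) + 3); last by lia.
by rewrite T3 T0.
Qed.

Lemma LB m : (forall i, i < m -> Q i) -> forall n n1, n1 = n + 1 ->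
  [/\ m = 4 * n -> f n <= f m,
      m = 4 * n + 1 -> f n + 1 <= f m,
      m = 4 * n + 2 -> minn (f n) (f n1) + 2 <= f m
    & m = 4 * n + 3 -> f n1 + 1 <= f m].
Proof.
move=> IH n n1 En1.
case: (posnP m) => [Em0|Hm].
  split => Em; try lia. have -> : n = 0 by lia. by rewrite Em0.
have [i [Hi Hp Fm]] := D2 m Hm.
have Cl := classify i m Hi Hp.
split => Em.
- case: Cl => [Ea|Eb|[u Eu]].
  + have [_ _ _ E] := IH i Hi (n - 1) n ltac:(lia).
    have := E ltac:(lia). lia.
  + have [_ E _ _] := IH i Hi (n - 1) n ltac:(lia).
    have := E ltac:(lia).
    have := Lip' (n - 1) n ltac:(lia). lia.
  + set k := u - n.
    have Hpk : pal k n.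
      apply: pal_tau; apply: (pal_sub _ _ _ _ Hp); lia.
    have := D1' k n ltac:(lia) Hpk.
    have [E _ _ _] := IH i Hi k (k + 1) ltac:(lia).
    have := E ltac:(lia). lia.
- case: Cl => [Ea|Eb|[u Eu]].
  + have [E _ _ _] := IH i Hi n n1 En1.
    have := E ltac:(lia). lia.
  + have [_ _ E _] := IH i Hi (n - 1) n ltac:(lia).
    have := E ltac:(lia).
    have := Lip' (n - 1) n ltac:(lia). lia.
  + set k := u - n.
    have Hpk : pal k n.
      apply: pal_tau; apply: (pal_sub _ _ _ _ Hp); lia.
    have := D1' k n ltac:(lia) Hpk.
    have [_ _ _ E] := IH i Hi (k - 1) k ltac:(lia).
    have := E ltac:(lia). lia.
- case: Cl => [Ea|Eb|[u Eu]].
  + have [_ E _ _] := IH i Hi n n1 En1.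
    have := E ltac:(lia). lia.
  + have [_ _ _ E] := IH i Hi (n - 1) n ltac:(lia).
    have := E ltac:(lia). lia.
  + set k := u - n.
    have Hpk : pal k n.
      apply: pal_tau; apply: (pal_sub _ _ _ _ Hp); lia.
    have := D1' k n ltac:(lia) Hpk.
    have Et := ext_letter i m k n Hp ltac:(lia) ltac:(lia) ltac:(lia).
    have Hpk' := pal_ext k n ltac:(lia) ltac:(lia) Hpk Et.
    have := D1' (k - 1) n1 ltac:(lia) ltac:(rewrite En1; exact: Hpk').
    have [_ _ E _] := IH i Hi (k - 1) k ltac:(lia).
    have := E ltac:(lia). lia.
- case: Cl => [Ea|Eb|[u Eu]].
  + have [_ _ E _] := IH i Hi n n1 En1.
    have := E ltac:(lia).
    have := Lip' n n1 En1. lia.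
  + exfalso.
    have := palAt _ _ i (4 * n + 2) Hp ltac:(lia) ltac:(lia).
    rewrite (_ : i = 4 * n); last by lia.
    by rewrite T0 T2; case: (T n).
  + set k := u - n.
    have Hpk : pal k n.
      apply: pal_tau; apply: (pal_sub _ _ _ _ Hp); lia.
    have Hpk' : pal (k - 1) (n + 1).
      case: (leqP k n) => Hkn.
        have Et := ext_letter i m k n Hp ltac:(lia) ltac:(lia) ltac:(lia).
        exact: (pal_ext k n ltac:(lia) ltac:(lia) Hpk Et).
      move=> j Hj; congr T; lia.
    have := D1' (k - 1) n1 ltac:(lia) ltac:(rewrite En1; exact: Hpk').
    have [_ E _ _] := IH i Hi (k - 1) k ltac:(lia).
    have := E ltac:(lia). lia.
Qed.

Lemma mainQ m : Q m.
Proof.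
elim/ltn_ind: m => m IH n n1 En1.
have [L0 L1 L2 L3] := LB m IH n n1 En1.
have := U0 n. have := U2 n n1 En1. have := U3 n n1 En1.
have := Lip' (4 * n) (4 * n + 1) ltac:(lia).
have := Lip' (4 * n + 1) (4 * n + 2) ltac:(lia).
split => Em; subst m; lia.
Qed.

Theorem theorem4 : forall n : nat,
  [/\ PPL_t (4 * n) = PPL_t n,
      PPL_t (4 * n + 1) = PPL_t n + 1,
      PPL_t (4 * n + 2) = minn (PPL_t n) (PPL_t (n + 1)) + 2
    & PPL_t (4 * n + 3) = PPL_t (n + 1) + 1].
Proof.
move=> n.
have [A _ _ _] := mainQ (4 * n) n (n + 1) erefl.
have [_ B _ _] := mainQ (4 * n + 1) n (n + 1) erefl.
have [_ _ C _] := mainQ (4 * n + 2) n (n + 1) erefl.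
have [_ _ _ D] := mainQ (4 * n + 3) n (n + 1) erefl.
split; [exact: A | exact: B | exact: C | exact: D].
Qed.
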